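(* Let the (random) sets $S_{\rm tr},S_1,\dots,S_m$ be the output of the Randomized meta-Greedy algorithm (defined in the context), and suppose every $f_i$ is monotone and submodular. Let $b=\max\{\frac{1}{k-l},\frac1l\}$ and $c=3\sqrt{b\log(1/b)}$. Then $$\mathbb{E}\Bigl[\sum_{i=1}^m f_i(S_{\rm tr}\cup S_i)\Bigr]\;\ge\;\bigl(1-b-\exp(-1+c)\bigr)\,\mathrm{OPT}.$$
   Context: $V$ is a finite ground set with $|V|=n$; $k,l$ are integers with $1\le l<k\le n$. For $i=1,\dots,m$, $f_i:2^V\to\mathbb{R}_{\ge 0}$ is a set function; monotone means $A\subseteq B\Rightarrow f_i(A)\le f_i(B)$, submodular means $f_i(A)+f_i(B)\ge f_i(A\cup B)+f_i(A\cap B)$. Define $$\mathrm{OPT}=\max_{S_{\rm tr}\subseteq V,\,|S_{\rm tr}|\le l}\;\sum_{i=1}^m\;\max_{S_i\subseteq V,\,|S_i|\le k-l} f_i(S_{\rm tr}\cup S_i).$$ Randomized meta-Greedy: start with $S_{\rm tr}=S_1=\dots=S_m=\emptyset$. While $|S_{\rm tr}|<l$ and $|S_i|<k-l$ (all $S_i$ have equal size throughout): compute $e_i^*\in\arg\max_{e\in V}[f_i(S_{\rm tr}\cup S_i\cup\{e\})-f_i(S_{\rm tr}\cup S_i)]$ for each $i$ and $e_{\rm tr}^*\in\arg\max_{e\in V}\sum_{i=1}^m[f_i(S_{\rm tr}\cup S_i\cup\{e\})-f_i(S_{\rm tr}\cup S_i)]$; then, independently of the past, with probability $l/k$ set $S_{\rm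 tr}\leftarrow S_{\rm tr}\cup\{e^*_{\rm tr}\}$, and otherwise (probability $(k-l)/k$) set $S_i\leftarrow S_i\cup\{e_i^*\}$ for all $i=1,\dots,m$. After the loop, whichever of $S_{\rm tr}$ (size limit $l$) or the $S_i$'s (size limit $k-l$) has not reached its limit is filled up greedily with the same greedy rules until the limit is reached. Ties are broken arbitrarily; $\log$ is the natural logarithm. *)

(* Defs.v *)
From HB Require Import structures.
From mathcomp Require Import all_boot all_order all_algebra.
From mathcomp Require Import reals sequences exp.
Set Implicit Arguments. Unset Strict Implicit. Unset Printing Implicit Defensive.
Import Order.TTheory GRing.Theory Num.Theory.
Local Open Scope ring_scope.

Section MetaGreedy.
Variables (R : realType) (V : finType) (m k l : nat).
Variable f : 'I_m -> {set V} -> R.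

Definition monotone_set (g : {set V} -> R) :=
  forall A B : {set V}, A \subset B -> g A <= g B.
Definition submodular_set (g : {set V} -> R) :=
  forall A B : {set V}, g (A :|: B) + g (A :&: B) <= g A + g B.

Definition gain (g : {set V} -> R) (S : {set V}) (e : V) := g (S :|: [set e]) - g S.

Definition OPT : R :=
  \big[Num.max/0]_(Str : {set V} | (#|Str| <= l)%N)
    \sum_(i < m) \big[Num.max/0]_(Si : {set V} | (#|Si| <= k - l)%N) f i (Str :|: Si).

(* Tie-breaking rules: arbitrary (history-dependent) choices of maximizers.
   The history is the sequence of step types performed so far
   (true = element added to S_tr, false = elements added to all S_i). *)
Variable ctr : seq bool -> {set V} -> {ffun 'I_m -> {set V}} -> V.
Variable ci : seq bool -> 'I_m -> {set V} -> {set V} -> V.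

Definition valid_tr_choice :=
  forall h Str (Ss : {ffun 'I_m -> {set V}}) (e : V),
    \sum_(i < m) gain (f i) (Str :|: Ss i) e <=
    \sum_(i < m) gain (f i) (Str :|: Ss i) (ctr h Str Ss).
Definition valid_i_choice :=
  forall h (i : 'I_m) Str Si (e : V),
    gain (f i) (Str :|: Si) e <= gain (f i) (Str :|: Si) (ci h i Str Si).

Definition state := ({set V} * {ffun 'I_m -> {set V}} * seq bool)%type.

Definition step_tr (st : state) : state :=
  let: (Str, Ss, h) := st in (Str :|: [set ctr h Str Ss], Ss, rcons h true).
Definition step_i (st : state) : state :=
  let: (Str, Ss, h) := st in
  (Str, [ffun i => Ss i :|: [set ci h i Str (Ss i)]], rcons h false).

Definition ntr (st : state) := count id st.2.
Definition ni (st : state) := count negb st.2.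

(* main randomized loop, driven by coin flips (true = prob l/k: add to S_tr) *)
Fixpoint loop (coins : seq bool) (st : state) : state :=
  match coins with
  | [::] => st
  | c :: cs =>
      if (ntr st < l)%N && (ni st < k - l)%N
      then loop cs (if c then step_tr st else step_i st)
      else st
  end.

Definition fill (st : state) : state :=
  iter (k - l - ni st) step_i (iter (l - ntr st) step_tr st).

Definition init_state : state := (set0, [ffun => set0], [::]).

(* k coins suffice: the loop performs at most k - 1 iterations *)
Definition final_state (w : {ffun 'I_k -> bool}) : state :=
  fill (loop [seq w j | j <- enum 'I_k] init_state).

Definition value (st : state) : R :=
  let: (Str, Ss, _) := st in \sum_(i < m) f i (Str :|: Ss i).

Definition coin_prob (w : {ffun 'I_k -> bool}) : R :=
  let p := l%:R / k%:R in \prod_(j < k) (if w j then p else 1 - p).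

Definition expected_value : R :=
  \sum_(w : {ffun 'I_k -> bool}) coin_prob w * value (final_state w).

End MetaGreedy.

Definition bconst (R : realType) (k l : nat) : R :=
  Num.max ((k - l)%:R^-1) (l%:R^-1).
Definition cconst (R : realType) (k l : nat) : R :=
  3 * Num.sqrt (bconst R k l * ln ((bconst R k l)^-1)).

(* Main.v *)
Require Import Defs.
From HB Require Import structures.
From mathcomp Require Import all_boot all_order all_algebra.
From mathcomp Require Import reals sequences exp.
From mathcomp Require Import ring lra zify.
Import Order.TTheory GRing.Theory Num.Theory.
Local Open Scope ring_scope.

Module Aux.
Set Implicit Arguments. Unset Strict Implicit. Unset Printing Implicit Defensive.

Section ExDef.
Variables (R : realType) (p : R).

Fixpoint Ex (n : nat) (G : seq bool -> R) : R :=
  match n with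
  | 0 => G [::]
  | n'.+1 => p * Ex n' (fun s => G (true :: s)) + (1 - p) * Ex n' (fun s => G (false :: s))
  end.

Lemma Ex_ext n G H : (forall s, G s = H s) -> Ex n G = Ex n H.
Proof.
elim: n G H => [|n IH] G H E /=; first exact: E.
by congr (_ * _ + _ * _); apply: IH => s; apply: E.
Qed.

Lemma Ex_size_ext n G H : (forall s, size s = n -> G s = H s) -> Ex n G = Ex n H.
Proof.
elim: n G H => [|n IH] G H E /=; first exact: E.
by congr (_ * _ + _ * _); apply: IH => s Hs; apply: E; rewrite /= Hs.
Qed.

Lemma ExD n G H : Ex n (fun s => G s + H s) = Ex n G + Ex n H.
Proof.
elim: n G H => [|n IH] G H //=.
rewrite (IH (fun s => G (true :: s))) (IH (fun s => G (false :: s))); ring.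
Qed.

Lemma ExZ n a G : Ex n (fun s => a * G s) = a * Ex n G.
Proof.
elim: n G => [|n IH] G //=.
rewrite (IH (fun s => G (true :: s))) (IH (fun s => G (false :: s))); ring.
Qed.

Lemma Ex_cst n a : Ex n (fun _ => a) = a.
Proof. by elim: n => [|n IH] //=; rewrite IH; ring. Qed.

Lemma ExN n G : Ex n (fun s => - G s) = - Ex n G.
Proof. have -> : - Ex n G = -1 * Ex n G by ring. by rewrite -ExZ; apply: Ex_ext => s; ring. Qed.

Lemma ExB n G H : Ex n (fun s => G s - H s) = Ex n G - Ex n H.
Proof. by rewrite ExD ExN. Qed.

Lemma Ex_size n a : Ex n (fun s => (size s)%:R + a) = n%:R + a.
Proof.
elim: n a => [|n IH] a /=; first by rewrite add0r.
have E : Ex n (fun s => (size s).+1%:R + a) = Ex n (fun s => (size s)%:R + (a + 1)).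
  by apply: Ex_ext => s; rewrite -addn1 natrD; ring.
rewrite E IH -addn1 natrD; ring.
Qed.

Hypothesis p0 : 0 <= p.
Hypothesis p1 : p <= 1.

Lemma Ex_le n G H : (forall s, size s = n -> G s <= H s) -> Ex n G <= Ex n H.
Proof.
elim: n G H => [|n IH] G H E /=; first exact: E.
have q0 : 0 <= 1 - p by rewrite subr_ge0.
apply: lerD; apply: ler_wpM2l => //; apply: IH => s Hs; apply: E; by rewrite /= Hs.
Qed.

Definition cprob n (w : {ffun 'I_n -> bool}) : R :=
  \prod_(j < n) (if w j then p else 1 - p).

Lemma sum_Ex n (G : seq bool -> R) :
  \sum_(w : {ffun 'I_n -> bool}) cprob w * G [seq w j | j <- enum 'I_n] = Ex n G.
Proof.
elim: n G => [|n IH] G /=.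
  rewrite (big_pred1 [ffun j => false]); last first.
    by move=> w /=; symmetry; apply/eqP/ffunP => -[].
  by rewrite /cprob big_ord0 mul1r enum_ord0.
pose h (x : bool * {ffun 'I_n -> bool}) : {ffun 'I_n.+1 -> bool} :=
  [ffun j => if unlift ord0 j is Some j' then x.2 j' else x.1].
pose hi (w : {ffun 'I_n.+1 -> bool}) : bool * {ffun 'I_n -> bool} :=
  (w ord0, [ffun j => w (lift ord0 j)]).
have hK : cancel hi h.
  move=> w; apply/ffunP => j; rewrite /h /hi ffunE.
  by case: unliftP => [j' ->|->] //=; rewrite ffunE.
have hiK : cancel h hi.
  by move=> [b g]; rewrite /h /hi /= ffunE unlift_none; congr pair;
    apply/ffunP => j; rewrite !ffunE liftK.
rewrite (reindex h); last by exists hi => x _; [exact: hiK | exact: hK].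
rewrite -(pair_bigA _ (fun b g => cprob (h (b, g)) *
   G [seq h (b, g) j | j <- enum 'I_n.+1])) big_bool /=.
have E b g : cprob (h (b, g)) * G [seq h (b, g) j | j <- enum 'I_n.+1] =
   (if b then p else 1 - p) * (cprob g * G (b :: [seq g j | j <- enum 'I_n])).
  rewrite /cprob big_ord_recl enum_ordSl /= !ffunE unlift_none -map_comp.
  under eq_bigr do rewrite ffunE liftK.
  rewrite mulrA; congr (_ * _ * G (_ :: _)); apply: eq_map => j /=.
  by rewrite ffunE liftK.
under eq_bigr do rewrite E.
under [X in _ + X]eq_bigr do rewrite E.
rewrite -!mulr_sumr.
by rewrite (IH (fun s => G (true :: s))) (IH (fun s => G (false :: s))).
Qed.

End ExDef.

Section Algo.
Variables (R : realType) (V : finType) (m k l : nat).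
Variable f : 'I_m -> {set V} -> R.
Variable ctr : seq bool -> {set V} -> {ffun 'I_m -> {set V}} -> V.
Variable ci : seq bool -> 'I_m -> {set V} -> {set V} -> V.
Hypothesis l1 : (1 <= l)%N.
Hypothesis lk : (l < k)%N.
Hypothesis f0 : forall i A, 0 <= f i A.
Hypothesis fmono : forall i, monotone_set (f i).
Hypothesis fsub : forall i, submodular_set (f i).
Hypothesis vtr : valid_tr_choice f ctr.
Hypothesis vi : valid_i_choice f ci.

Lemma gain_ge0 i S e : 0 <= gain (f i) S e.
Proof. by rewrite /gain subr_ge0; apply: fmono; apply: subsetUl. Qed.

Lemma submod_seq i A s :
  f i (A :|: [set:: s]) <= f i A + \sum_(e <- s) gain (f i) A e.
Proof.
elim: s => [|e s IH]; first by rewrite set_nil setU0 big_nil addr0.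
rewrite set_cons big_cons.
have H := fsub i (A :|: [set:: s]) (A :|: [set e]).
have E1 : (A :|: [set:: s]) :|: (A :|: [set e]) = A :|: (e |: [set:: s]).
  by apply/setP => x; rewrite !inE; case: (x \in A); case: (x == e); case: (x \in s).
have H2 : f i A <= f i ((A :|: [set:: s]) :&: (A :|: [set e])).
  by apply: fmono; rewrite subsetI !subsetUl.
rewrite E1 in H; rewrite /gain; lra.
Qed.

Notation val := (value f).
Notation OPTv := (OPT k l f).

Lemma OPT_ge0 : 0 <= OPTv.
Proof.
rewrite /OPT; elim/big_ind: _ => //; first by move=> x y ? ?; rewrite le_max; apply/orP; left.
move=> O _; apply: sumr_ge0 => i _; elim/big_ind: _ => //.
by move=> x y ? ?; rewrite le_max; apply/orP; left.
Qed.

Lemma val_ge0 st : 0 <= val st.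
Proof. by case: st => [[Str Ss] h]; apply: sumr_ge0 => i _; exact: f0. Qed.

Definition Gtr Str (Ss : {ffun 'I_m -> {set V}}) h :=
  \sum_(i < m) gain (f i) (Str :|: Ss i) (ctr h Str Ss).
Definition Gi Str (Ss : {ffun 'I_m -> {set V}}) h :=
  \sum_(i < m) gain (f i) (Str :|: Ss i) (ci h i Str (Ss i)).

Lemma val_step_tr Str Ss h :
  val (step_tr ctr (Str, Ss, h)) = val (Str, Ss, h) + Gtr Str Ss h.
Proof.
rewrite /= /Gtr /gain sumrB addrC subrK; apply: eq_bigr => i _.
by rewrite setUAC.
Qed.

Lemma val_step_i Str Ss h :
  val (step_i ci (Str, Ss, h)) = val (Str, Ss, h) + Gi Str Ss h.
Proof.
rewrite /= /Gi /gain sumrB addrC subrK; apply: eq_bigr => i _.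
by rewrite ffunE setUA.
Qed.

Lemma OPT_bound Str Ss h :
  OPTv <= val (Str, Ss, h) + l%:R * Gtr Str Ss h + (k - l)%:R * Gi Str Ss h.
Proof.
have Gtr0 : 0 <= Gtr Str Ss h by apply: sumr_ge0 => i _; exact: gain_ge0.
have Gi0 : 0 <= Gi Str Ss h by apply: sumr_ge0 => i _; exact: gain_ge0.
have B0 : 0 <= val (Str, Ss, h) + l%:R * Gtr Str Ss h + (k - l)%:R * Gi Str Ss h.
  by rewrite !addr_ge0 ?mulr_ge0 ?val_ge0.
rewrite /OPT; elim/big_ind: _ => //.
  by move=> x y ? ?; rewrite ge_max; apply/andP.
move=> O HO.
set A := fun i => Str :|: Ss i.
pose Bi i := f i (A i) + \sum_(e <- enum O) gain (f i) (A i) e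
   + (k - l)%:R * gain (f i) (A i) (ci h i Str (Ss i)).
apply: (@le_trans _ _ (\sum_(i < m) Bi i)).
  apply: ler_sum => i _.
  have Bi0 : 0 <= Bi i.
    by rewrite /Bi !addr_ge0 ?mulr_ge0 ?f0 ?sumr_ge0 // => *; exact: gain_ge0.
  elim/big_ind: _ => //; first by move=> x y ? ?; rewrite ge_max; apply/andP.
  move=> Si HSi.
  apply: (@le_trans _ _ (f i (A i :|: [set:: enum O ++ enum Si]))).
    apply: fmono; apply/subsetP => x; rewrite !inE mem_cat !mem_enum => /orP[]->;
      by rewrite ?orbT.
  apply: (le_trans (submod_seq _ _ _)).
  rewrite big_cat /= /Bi addrA lerD2l.
  apply: (@le_trans _ _ (\sum_(e <- enum Si) gain (f i) (A i) (ci h i Str (Ss i)))).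
    by apply: ler_sum => e _; exact: vi.
  rewrite big_enum /= sumr_const -[_ *+ #|Si|]mulr_natl; apply: ler_wpM2r; first exact: gain_ge0.
  by rewrite ler_nat.
rewrite /Bi !big_split /= -mulr_sumr.
rewrite -addrA -[X in _ <= X]addrA; apply: lerD; first by [].
apply: lerD => //.
rewrite exchange_big /=.
apply: (@le_trans _ _ (\sum_(e <- enum O) Gtr Str Ss h)).
  by apply: ler_sum => e _; exact: vtr.
rewrite big_enum /= sumr_const -[_ *+ #|O|]mulr_natl; apply: ler_wpM2r => //.
by rewrite ler_nat.
Qed.


Local Notation K := (k%:R : R).
Local Notation L := (l%:R : R).
Local Notation p := (L / K).
Local Notation r := (1 - K^-1).
Local Notation lp := (loop k l ctr ci).

Lemma K_gt0 : 0 < K.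
Proof. by rewrite ltr0n; apply: leq_ltn_trans lk. Qed.

Lemma p_ge0 : 0 <= p.
Proof. by rewrite divr_ge0 // ltW // K_gt0. Qed.

Lemma p_le1 : p <= 1.
Proof. by rewrite ler_pdivrMr ?K_gt0 // mul1r ler_nat ltnW. Qed.

Lemma r_ge0 : 0 <= r.
Proof.
by rewrite subr_ge0 invf_le1 ?K_gt0 // ler1n; apply: leq_ltn_trans lk.
Qed.

Lemma r_le1 : r <= 1.
Proof. by rewrite lerBlDr lerDl invr_ge0 ltW // K_gt0. Qed.

Lemma bern n : 1 - n%:R / K <= r ^+ n.
Proof.
elim: n => [|n IH]; first by rewrite mul0r subr0 expr0.
rewrite exprS.
have r0 := r_ge0.
have := ler_wpM2l r0 IH.
have Kp := K_gt0.
have E : r * (1 - n%:R / K) = 1 - n.+1%:R / K + n%:R / K * K^-1.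
  by rewrite -natr1; field; rewrite gt_eqF.
rewrite E => H; apply: le_trans H.
rewrite lerDl !mulr_ge0 // invr_ge0 ltW //.
Qed.

Lemma step_ineq st :
  OPTv - (p * val (step_tr ctr st) + (1 - p) * val (step_i ci st)) <= r * (OPTv - val st).
Proof.
case: st => [[Str Ss] h].
rewrite val_step_tr val_step_i.
have HB := OPT_bound Str Ss h.
rewrite natrB ?(ltnW lk) // in HB.
have Kp := K_gt0.
move: HB; set v := val _; set G := Gtr _ _ _; set g := Gi _ _ _ => HB.
rewrite -subr_ge0.
have -> : r * (OPTv - v) - (OPTv - (p * (v + G) + (1 - p) * (v + g))) =
  K^-1 * (L * G + (K - L) * g - (OPTv - v)).
  by field; rewrite gt_eqF.
apply: mulr_ge0; first by rewrite invr_ge0 ltW.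
lra.
Qed.

Definition cond (st : state V m) := (ntr st < l)%N && (ni st < k - l)%N.
Definition cnt (st : state V m) := (ntr st + ni st)%N.

Lemma loop_stop s st : ~~ cond st -> lp s st = st.
Proof. rewrite /cond => /negbTE H; case: s => [|c s] //=; by rewrite H. Qed.

Lemma loop_cons c s st : cond st ->
  lp (c :: s) st = lp s (if c then step_tr ctr st else step_i ci st).
Proof. by rewrite /cond /= => ->. Qed.

Lemma ntr_tr st : ntr (step_tr ctr st) = (ntr st).+1.
Proof. by case: st => [[Str Ss] h]; rewrite /ntr /= -cats1 count_cat /= addn0 addn1. Qed.
Lemma ni_tr st : ni (step_tr ctr st) = ni st.
Proof. by case: st => [[Str Ss] h]; rewrite /ni /= -cats1 count_cat /= !addn0. Qed.
Lemma ntr_i st : ntr (step_i ci st) = ntr st.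
Proof. by case: st => [[Str Ss] h]; rewrite /ntr /= -cats1 count_cat /= !addn0. Qed.
Lemma ni_i st : ni (step_i ci st) = (ni st).+1.
Proof. by case: st => [[Str Ss] h]; rewrite /ni /= -cats1 count_cat /= addn0 addn1. Qed.

Lemma cnt_tr st : cnt (step_tr ctr st) = (cnt st).+1.
Proof. by rewrite /cnt ntr_tr ni_tr addSn. Qed.
Lemma cnt_i st : cnt (step_i ci st) = (cnt st).+1.
Proof. by rewrite /cnt ntr_i ni_i addnS. Qed.

Lemma ExS n (G : seq bool -> R) : Ex p n.+1 G =
  p * Ex p n (fun s => G (true :: s)) + (1 - p) * Ex p n (fun s => G (false :: s)).
Proof. by []. Qed.

Definition Wst s st : R := (size s)%:R + (cnt st)%:R - (cnt (lp s st))%:R.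

Lemma mainA n st :
  Ex p n (fun s => OPTv - val (lp s st)) <=
  r ^+ n * (OPTv - val st) + OPTv / K * Ex p n (fun s => Wst s st).
Proof.
have Kp := K_gt0.
have O0 := OPT_ge0.
elim: n st => [|n IH] st.
  by rewrite /= /Wst /= expr0 mul1r add0r subrr mulr0 addr0.
have [C|C] := boolP (cond st); last first.
  have -> : Ex p n.+1 (fun s => OPTv - val (lp s st)) = OPTv - val st.
    by rewrite -(Ex_cst p n.+1 (OPTv - val st)); apply: Ex_ext => s; rewrite loop_stop.
  have -> : Ex p n.+1 (fun s => Wst s st) = n.+1%:R.
    rewrite -(addr0 n.+1%:R) -(Ex_size p n.+1 0); apply: Ex_ext => s.
    by rewrite /Wst loop_stop // addrK addr0.
  have H1 := bern n.+1.
  have v0 := val_ge0 st.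
  have H2 : r ^+ n.+1 <= 1 by apply: exprn_ile1; [exact: r_ge0 | exact: r_le1].
  have E : OPTv / K * n.+1%:R = OPTv * (n.+1%:R / K) by rewrite mulrAC -mulrA.
  rewrite E; nra.
have V1 b : Ex p n (fun s => OPTv - val (lp (b :: s) st)) =
    Ex p n (fun s => OPTv - val (lp s (if b then step_tr ctr st else step_i ci st))).
  by apply: Ex_ext => s; rewrite loop_cons.
have W1 b : Ex p n (fun s => Wst (b :: s) st) =
    Ex p n (fun s => Wst s (if b then step_tr ctr st else step_i ci st)).
  apply: Ex_ext => s; rewrite /Wst loop_cons //.
  by case: b; rewrite ?cnt_tr ?cnt_i /= -!natr1; ring.
rewrite ExS [X in _ <= _ + _ * X]ExS V1 V1 W1 W1.
have q0 : 0 <= 1 - p by rewrite subr_ge0 p_le1.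
apply: le_trans (lerD (ler_wpM2l p_ge0 (IH _)) (ler_wpM2l q0 (IH _))) _.
have S := step_ineq st.
have rn0 : 0 <= r ^+ n by apply: exprn_ge0; exact: r_ge0.
set A1 := Ex _ _ _. set A2 := Ex _ _ _.
rewrite exprSr.
set v1 := val _. set v2 := val _.
rewrite [X in X <= _](_ : _ = r ^+ n * (OPTv - (p * v1 + (1 - p) * v2)) +
    OPTv / K * (p * A1 + (1 - p) * A2)); last by ring.
rewrite lerD2r -[X in _ <= X]mulrA; exact: ler_wpM2l.
Qed.

Definition Zst (st : state V m) : R := (1 - p) * (ntr st)%:R - p * (ni st)%:R.
Definition gst (st : state V m) : R := Zst st ^+ 2 - p * (1 - p) * (cnt st)%:R.

Lemma mainB n st : Ex p n (fun s => gst (lp s st)) = gst st.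
Proof.
elim: n st => [|n IH] st; first by [].
have [C|C] := boolP (cond st); last first.
  by rewrite -(Ex_cst p n.+1 (gst st)); apply: Ex_ext => s; rewrite loop_stop.
have V1 b : Ex p n (fun s => gst (lp (b :: s) st)) =
    Ex p n (fun s => gst (lp s (if b then step_tr ctr st else step_i ci st))).
  by apply: Ex_ext => s; rewrite loop_cons.
rewrite ExS V1 V1 !IH /gst /Zst ntr_tr ni_tr ntr_i ni_i cnt_tr cnt_i -!natr1; ring.
Qed.

Lemma invC s st : (ntr st <= l)%N -> (ni st <= k - l)%N ->
  [&& (ntr (lp s st) <= l)%N, (ni (lp s st) <= k - l)%N &
      (~~ cond (lp s st)) || (cnt (lp s st) == cnt st + size s)%N].
Proof.
elim: s st => [|c s IH] st H1 H2; first by rewrite /= H1 H2 addn0 eqxx orbT.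
have [C|C] := boolP (cond st); last by rewrite loop_stop // H1 H2 C.
rewrite loop_cons //.
move: C; rewrite /cond => /andP[C1 C2].
case: c.
  have := IH (step_tr ctr st); rewrite ntr_tr ni_tr cnt_tr => /(_ C1 H2).
  by rewrite addSnnS.
have := IH (step_i ci st); rewrite ntr_i ni_i cnt_i => /(_ H1 C2).
by rewrite addSnnS.
Qed.

Local Notation st0 := (init_state V m).

Lemma final_props s : size s = k ->
  [/\ (ntr (lp s st0) <= l)%N, (ni (lp s st0) <= k - l)%N &
      (ntr (lp s st0) = l) \/ (ni (lp s st0) = k - l)%N].
Proof.
move=> Hs.
have /and3P[A1 A2 A3] := @invC s st0 (leq0n _) (leq0n _).
split => //.
have : ~~ cond (lp s st0).
  move: A3; rewrite Hs /cnt /= => /orP[] // /eqP E.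
  rewrite /cond; apply/negP => /andP[B1 B2].
  have E0 : (ntr st0 + ni st0 = 0)%N by [].
  rewrite E0 add0n in E; move: B1 B2 E; have := lk; lia.
rewrite /cond negb_and -!leqNgt => /orP[B|B]; [left|right]; lia.
Qed.

Local Notation b := (bconst R k l).

Lemma b_ge_l : L^-1 <= b.
Proof. by rewrite /bconst le_max lexx orbT. Qed.
Lemma b_ge_kl : (k - l)%:R^-1 <= b.
Proof. by rewrite /bconst le_max lexx. Qed.

Lemma pointwise s : size s = k ->
  p * (1 - p) * (Wst s st0) ^+ 2 <= K * b * (Zst (lp s st0)) ^+ 2.
Proof.
move=> Hs.
have [A1 A2 A3] := final_props Hs.
have Kp := K_gt0.
have Lp : 0 < L by rewrite ltr0n.
have KL : L < K by rewrite ltr_nat.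
have p0 := p_ge0.
have E0 : cnt st0 = 0%N by [].
rewrite /Wst /Zst Hs E0 mulr0n addr0 /cnt.
move: A3 A1 A2; set a := ntr _; set fr := ni _ => A3 A1 A2.
rewrite natrD.
case: A3 => E.
  rewrite E.
  have L0 : L != 0 by rewrite gt_eqF.
  have bL : L^-1 * L <= b * L.
    by apply: ler_wpM2r; [exact: ltW | exact: b_ge_l].
  rewrite mulVf // in bL.
  have -> : (1 - p) * L - p * fr%:R = p * (K - (L + fr%:R)) by field; rewrite gt_eqF.
  set W := K - _.
  have -> : K * b * (p * W) ^+ 2 = (b * L) * (p * W ^+ 2) by field; rewrite gt_eqF.
  have X0 : 0 <= p * W ^+ 2 by rewrite mulr_ge0 // sqr_ge0.
  nra.
rewrite E natrB ?(ltnW lk) //.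
have KLp : 0 < K - L by rewrite subr_gt0.
have KL0 : K - L != 0 by rewrite gt_eqF.
have bL : (K - L)^-1 * (K - L) <= b * (K - L).
  apply: ler_wpM2r; first exact: ltW.
  by rewrite -natrB ?(ltnW lk) // b_ge_kl.
rewrite mulVf // in bL.
have -> : (1 - p) * a%:R - p * (K - L) = - ((1 - p) * (K - (a%:R + (K - L)))).
  by field; rewrite gt_eqF.
set W := K - _.
have -> : K * b * (- ((1 - p) * W)) ^+ 2 = (b * (K - L)) * ((1 - p) * W ^+ 2).
  by field; rewrite gt_eqF.
have q0 : 0 <= 1 - p by rewrite subr_ge0 p_le1.
have X0 : 0 <= (1 - p) * W ^+ 2 by rewrite mulr_ge0 // sqr_ge0.
have p1 := p_le1.
nra.
Qed.

Lemma val_tr_ge st : val st <= val (step_tr ctr st).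
Proof.
case: st => [[Str Ss] h]; rewrite val_step_tr lerDl.
by apply: sumr_ge0 => i _; exact: gain_ge0.
Qed.

Lemma val_i_ge st : val st <= val (step_i ci st).
Proof.
case: st => [[Str Ss] h]; rewrite val_step_i lerDl.
by apply: sumr_ge0 => i _; exact: gain_ge0.
Qed.

Lemma iter_tr_ge n st : val st <= val (iter n (step_tr ctr) st).
Proof. elim: n => [|n IH] //=; exact: le_trans IH (val_tr_ge _). Qed.

Lemma iter_i_ge n st : val st <= val (iter n (step_i ci) st).
Proof. elim: n => [|n IH] //=; exact: le_trans IH (val_i_ge _). Qed.

Lemma val_fill st : val st <= val (fill k l ctr ci st).
Proof. rewrite /fill; exact: le_trans (iter_tr_ge _ _) (iter_i_ge _ _). Qed.

Lemma rk : r ^+ k <= expR (-1).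
Proof.
have Kp := K_gt0.
have H : r <= expR (- K^-1) by have := expR_ge1Dx (- K^-1).
have -> : expR (-1) = expR (- K^-1) ^+ k.
  by rewrite -expRM_natl; congr expR; field; rewrite gt_eqF.
apply: (lerXn2r k) => //; rewrite ?nnegrE ?r_ge0 //.
exact: expR_ge0.
Qed.

Lemma b_gt0 : 0 < b.
Proof.
apply: lt_le_trans b_ge_l; rewrite invr_gt0 ltr0n; exact: l1.
Qed.

Lemma final_bound :
  (1 - expR (-1) - Num.sqrt b) * OPTv <=
  Ex p k (fun s => val (fill k l ctr ci (lp s st0))).
Proof.
have Kp := K_gt0.
have O0 := OPT_ge0.
have p0 := p_ge0.
have b0 := b_gt0.
set s0 := Num.sqrt b.
have s0p : 0 < s0 by rewrite sqrtr_gt0.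
have ss : s0 ^+ 2 = b by rewrite sqr_sqrtr // ltW.
have pq : 0 < p * (1 - p).
  apply: mulr_gt0; first by rewrite divr_gt0 // ltr0n; exact: l1.
  by rewrite subr_gt0 ltr_pdivrMr // mul1r ltr_nat.
have g0 : gst st0 = 0.
  have E1 : ntr st0 = 0%N by []. have E2 : ni st0 = 0%N by [].
  by rewrite /gst /Zst /cnt E1 E2 /= !mulr0n !mulr0 subrr expr0n /= subrr.
have EZ : Ex p k (fun s => Zst (lp s st0) ^+ 2) =
    p * (1 - p) * Ex p k (fun s => (cnt (lp s st0))%:R).
  rewrite -ExZ -[X in _ = X]add0r -g0 -(mainB k st0) -ExD.
  by apply: Ex_ext => s; rewrite /gst subrK.
have Ecnt : Ex p k (fun s => (cnt (lp s st0))%:R) <= K.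
  rewrite -[X in _ <= X](Ex_cst p k K); apply: Ex_le => //; first exact: p_le1.
  move=> s Hs; have [A1 A2 _] := final_props Hs.
  rewrite ler_nat /cnt; apply: leq_trans (leq_add A1 A2) _.
  by rewrite subnKC // ltnW.
have EW2 : Ex p k (fun s => Wst s st0 ^+ 2) <= b * K ^+ 2.
  rewrite -(ler_pM2l pq).
  have H1 : p * (1 - p) * Ex p k (fun s => Wst s st0 ^+ 2) <=
      K * b * Ex p k (fun s => Zst (lp s st0) ^+ 2).
    rewrite -!ExZ; apply: Ex_le => //; first exact: p_le1.
    by move=> s Hs; exact: pointwise.
  apply: le_trans H1 _.
  rewrite EZ.
  have Kb : 0 <= K * b by rewrite mulr_ge0 // ltW.
  have := ler_wpM2l (ltW pq) Ecnt.
  move=> H; have := ler_wpM2l Kb H.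
  move=> H'; apply: le_trans H' _.
  by rewrite le_eqVlt; apply/orP; left; apply/eqP; ring.
set t := K * s0.
have tp : 0 < t by rewrite mulr_gt0.
have tt : t ^+ 2 = b * K ^+ 2 by rewrite /t exprMn ss mulrC.
have EW : Ex p k (fun s => Wst s st0) <= t.
  have H : Ex p k (fun s => (2 * t) * Wst s st0) <=
      Ex p k (fun s => Wst s st0 ^+ 2 + t ^+ 2).
    apply: Ex_le => //; first exact: p_le1.
    move=> s _; have := sqr_ge0 (Wst s st0 - t); nra.
  have E : Ex p k (fun s => Wst s st0 ^+ 2 + t ^+ 2) =
      Ex p k (fun s => Wst s st0 ^+ 2) + t ^+ 2 by rewrite ExD Ex_cst.
  rewrite ExZ E in H.
  nra.
have HA := mainA k st0.
have v0 := val_ge0 st0.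
have Hr := rk.
have r0 : 0 <= r ^+ k by apply: exprn_ge0; exact: r_ge0.
have Ev : Ex p k (fun s => val (lp s st0)) =
    OPTv - Ex p k (fun s => OPTv - val (lp s st0)).
  by rewrite ExB Ex_cst; ring.
have Hfill : Ex p k (fun s => val (lp s st0)) <=
    Ex p k (fun s => val (fill k l ctr ci (lp s st0))).
  apply: Ex_le => //; first exact: p_le1.
  by move=> s _; exact: val_fill.
apply: le_trans Hfill; rewrite Ev.
have T1 : r ^+ k * (OPTv - val st0) <= expR (-1) * OPTv.
  apply: le_trans (_ : r ^+ k * OPTv <= _).
    by apply: ler_wpM2l => //; lra.
  exact: ler_wpM2r.
have T2 : OPTv / K * Ex p k (fun s => Wst s st0) <= OPTv * s0.
  have OK : 0 <= OPTv / K by rewrite divr_ge0 // ltW.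
  apply: le_trans (ler_wpM2l OK EW) _.
  rewrite /t le_eqVlt; apply/orP; left; apply/eqP; field; by rewrite gt_eqF.
lra.
Qed.

End Algo.

Lemma e_inv (R : realType) : 1 / 3 <= expR (-1) :> R.
Proof.
set y := expR (- (1 / 10)) : R.
have hy : 9 / 10 <= y by have := expR_ge1Dx (- (1 / 10) : R); rewrite -/y; lra.
have -> : expR (-1) = y ^+ 10.
  by rewrite -expRM_natl; congr expR; field.
have y2 : 81 / 100 <= y ^+ 2 by rewrite expr2; nra.
have y4 : 6561 / 10000 <= y ^+ 2 * y ^+ 2 by nra.
have y8 : 43 / 100 <= (y ^+ 2 * y ^+ 2) * (y ^+ 2 * y ^+ 2) by nra.
have y10 : 1 / 3 <= (y ^+ 2 * y ^+ 2) * (y ^+ 2 * y ^+ 2) * y ^+ 2 by nra.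
by rewrite -!exprD in y10.
Qed.

Lemma numeric (R : realType) (b : R) : 0 < b -> b <= 1 ->
  1 - b - expR (-1 + 3 * Num.sqrt (b * ln (b^-1))) <= 1 - expR (-1) - Num.sqrt b.
Proof.
move=> b0 b1.
set s := Num.sqrt b.
set L := ln (b^-1).
have hL : 1 - b <= L.
  rewrite /L lnV ?posrE //.
  have : ln b <= b - 1.
    have := @le_ln1Dx R (b - 1); rewrite (_ : 1 + (b - 1) = b); last by ring.
    by apply; lra.
  lra.
have s0 : 0 <= s by exact: sqrtr_ge0.
have ss : s ^+ 2 = b by rewrite sqr_sqrtr // ltW.
have s1 : s <= 1 by rewrite /s -sqrtr1; apply: ler_wsqrtr.
have hs : 1 - s <= Num.sqrt L.
  have H1 : (1 - s) ^+ 2 <= 1 - b by rewrite -ss; nra.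
  have H2 : 1 - s = Num.sqrt ((1 - s) ^+ 2) by rewrite sqrtr_sqr ger0_norm // subr_ge0.
  rewrite H2; apply: ler_wsqrtr; lra.
have sL0 : 0 <= Num.sqrt L by exact: sqrtr_ge0.
rewrite sqrtrM ?(ltW b0) // -/s.
set c := 3 * (s * Num.sqrt L).
have c0 : 0 <= c by rewrite /c mulr_ge0 // mulr_ge0.
have E1 : expR (-1) * (1 + c) <= expR (-1 + c).
  by rewrite expRD; apply: ler_wpM2l; [exact: expR_ge0 | exact: expR_ge1Dx].
have E2 := e_inv R.
have E3 : s * (1 - s) <= s * Num.sqrt L by apply: ler_wpM2l.
have E4 : c / 3 <= expR (-1) * c by rewrite mulrC; apply: ler_wpM2r => //; lra.
have E5 : c / 3 = s * Num.sqrt L by rewrite /c; field.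
rewrite -ss expr2.
lra.
Qed.

End Aux.
Import Aux.

Theorem theorem2 (R : realType) (V : finType) (m k l : nat)
  (f : 'I_m -> {set V} -> R)
  (ctr : seq bool -> {set V} -> {ffun 'I_m -> {set V}} -> V)
  (ci : seq bool -> 'I_m -> {set V} -> {set V} -> V) :
  (1 <= l)%N -> (l < k)%N -> (k <= #|V|)%N ->
  (forall i A, 0 <= f i A) ->
  (forall i, monotone_set (f i)) ->
  (forall i, submodular_set (f i)) ->
  valid_tr_choice f ctr ->
  valid_i_choice f ci ->
  (1 - bconst R k l - expR (-1 + cconst R k l)) * OPT k l f
    <= expected_value k l f ctr ci.
Proof.
move=> l1 lk _ f0 fmono fsub vtr vi.
have -> : expected_value k l f ctr ci =
    Ex (l%:R / k%:R) k (fun s => value f (fill k l ctr ci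
       (loop k l ctr ci s (init_state V m)))).
  by rewrite /expected_value -sum_Ex.
apply: le_trans (final_bound l1 lk f0 fmono fsub vtr vi).
apply: ler_wpM2r; first exact: (OPT_ge0 _ _ f0).
have Lp : 0 < (l%:R : R) by rewrite ltr0n.
have KLp : 0 < ((k - l)%:R : R) by rewrite ltr0n subn_gt0.
have b0 : 0 < bconst R k l.
  apply: (@lt_le_trans _ _ (l%:R^-1)); first by rewrite invr_gt0.
  by rewrite /bconst le_max lexx orbT.
have b1 : bconst R k l <= 1.
  by rewrite /bconst ge_max !invf_le1 // ?ler1n ?subn_gt0 ?lk ?l1.
rewrite /cconst; exact: numeric.
Qed.
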